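(* Let $\mathcal P$ be a finite-dimensional complex solvable Poisson $n$-Lie algebra, and suppose that for some $x,m_1,\dots,m_{n-2}\in\mathcal P$ the restriction of the operator $Q_{(x,m_1,\dots,m_{n-2})}:z\mapsto[x,m_1,\dots,m_{n-2},z]$ to $\mathcal P^2$ is an invertible map $\mathcal P^2\to\mathcal P^2$. Then $\mathcal P\cdot\mathcal P=0$.
   Context: A Poisson $n$-Lie algebra is a commutative associative algebra $(\mathcal P,\cdot)$ with an $n$-linear skew-symmetric bracket satisfying the fundamental identity $[x_1,\dots,x_{n-1},[y_1,\dots,y_n]]=\sum_{i=1}^n[y_1,\dots,[x_1,\dots,x_{n-1},y_i],\dots,y_n]$ and the Leibniz rule $[y\cdot z,x_2,\dots,x_n]=y\cdot[z,x_2,\dots,x_n]+z\cdot[y,x_2,\dots,x_n]$. Products/brackets of subspaces are linear spans; $\mathcal P^2=[\mathcal P,\dots,\mathcal P]+\mathcal P\cdot\mathcal P$. $\mathcal P$ is solvable if $\mathcal P^{(s)}=0$ for some $s$, with $\mathcal P^{(1)}=\mathcal P$, $\mathcal P^{(k+1)}=[\mathcal P^{(k)},\mathcal P^{(k)},\mathcal P,\dots,\mathcal P]+\mathcal P^{(k)}\cdot\mathcal P^{(k)}$. *)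

(* Defs.v *)
From HB Require Import structures.
From mathcomp Require Import all_boot all_order all_algebra all_fingroup.
From mathcomp Require Import reals complex.
Set Implicit Arguments. Unset Strict Implicit. Unset Printing Implicit Defensive.
Import GRing.Theory.
Local Open Scope ring_scope.

(* Complex numbers: C = R[i] for R a realType (R is the real line up to
   isomorphism, so R[i] is the field of complex numbers).
   A finite-dimensional complex vector space is a  V : vectType R[i]. *)

Section PoissonNLie.
Variables (F : fieldType) (V : vectType F) (n : nat).

Definition upd (f : {ffun 'I_n -> V}) (i : nat) (u : V) : {ffun 'I_n -> V} :=
  [ffun j : 'I_n => if nat_of_ord j == i then u else f j].

Definition is_poisson_nlie (mul : V -> V -> V) (br : {ffun 'I_n -> V} -> V) : Prop :=
      (forall (a : F) (x y z : V), mul (a *: x + y) z = a *: mul x z + mul y z) /\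
      (forall x y : V, mul x y = mul y x) /\
      (forall x y z : V, mul x (mul y z) = mul (mul x y) z) /\
      (forall (f : {ffun 'I_n -> V}) (i : 'I_n) (a : F) (u v : V),
          br (upd f i (a *: u + v)) = a *: br (upd f i u) + br (upd f i v)) /\
      (forall (f : {ffun 'I_n -> V}) (s : 'S_n),
          br [ffun j => f (s j)] = (-1) ^+ (odd_perm s) *: br f) /\
      (* fundamental identity:
         [x_1,...,x_{n-1},[y_1,...,y_n]]
           = sum_i [y_1,...,[x_1,...,x_{n-1},y_i],...,y_n];
         the x_k are the first n-1 entries of x (its last entry is ignored) *)
      (forall x y : {ffun 'I_n -> V},
          br (upd x n.-1 (br y)) =
          \sum_(i < n) br (upd y i (br (upd x n.-1 (y i))))) /\
      (forall (x : {ffun 'I_n -> V}) (y z : V),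
          br (upd x 0 (mul y z)) = mul y (br (upd x 0 z)) + mul z (br (upd x 0 y))).

Definition in_span (S : V -> Prop) (v : V) : Prop :=
  exists s : seq V, (forall w, w \in s -> S w) /\ v \in <<s>>%VS.

Definition square (mul : V -> V -> V) (br : {ffun 'I_n -> V} -> V) : V -> Prop :=
  in_span (fun w => (exists f, w = br f) \/ (exists a b, w = mul a b)).

Definition derived_step (mul : V -> V -> V) (br : {ffun 'I_n -> V} -> V)
    (D : V -> Prop) : V -> Prop :=
  in_span (fun w =>
    (exists f : {ffun 'I_n -> V},
        (forall i : 'I_n, (nat_of_ord i < 2)%N -> D (f i)) /\ w = br f)
    \/ (exists a b, D a /\ D b /\ w = mul a b)).

(* derived_series k = P^(k+1); derived_series 0 = P *)
Fixpoint derived_series (mul : V -> V -> V) (br : {ffun 'I_n -> V} -> V)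
    (k : nat) : V -> Prop :=
  match k with
  | 0 => fun _ => True
  | k'.+1 => derived_step mul br (derived_series mul br k')
  end.

Definition solvable_pnl (mul : V -> V -> V) (br : {ffun 'I_n -> V} -> V) : Prop :=
  exists s : nat, forall v, derived_series mul br s v -> v = 0.

End PoissonNLie.

(* Main.v *)
Require Import Defs.
From HB Require Import structures.
From mathcomp Require Import all_boot all_order all_algebra all_fingroup.
From mathcomp Require Import reals complex.
Import GRing.Theory.
Local Open Scope ring_scope.

Lemma dbl0 (R : realType) (V : vectType R[i]) (v : V) : v + v = 0 -> v = 0.
Proof.
move=> h.
have h2 : (2%:R : R[i]) != 0 by rewrite Num.Theory.pnatr_eq0.
have : (2%:R : R[i])^-1 *: (2%:R *: v) = 0 by rewrite scaler_nat (mulr2n v) h scaler0.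
by rewrite scalerA mulVf // scale1r.
Qed.

Lemma selfdbl (V : zmodType) (t : V) : t = t + t -> t = 0.
Proof. by move=> /(congr1 (fun u => u - t)); rewrite subrr addrK => <-. Qed.

Theorem proposition5p17 (R : realType) (V : vectType R[i]) (n : nat)
    (hn : (2 <= n)%N)
    (mul : V -> V -> V) (br : {ffun 'I_n -> V} -> V)
    (hP : is_poisson_nlie mul br)
    (hsolv : solvable_pnl mul br)
    (xm : {ffun 'I_n -> V})
    (hQmaps : forall z, square mul br z -> square mul br (br (upd xm n.-1 z)))
    (hQinj : forall z1 z2, square mul br z1 -> square mul br z2 ->
        br (upd xm n.-1 z1) = br (upd xm n.-1 z2) -> z1 = z2)
    (hQsurj : forall w, square mul br w ->
        exists z, square mul br z /\ br (upd xm n.-1 z) = w) :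
  forall a b : V, mul a b = 0.
Proof.
have [k ek] : exists k, n = k.+2 by exists n.-2; move: hn; clear; case: n => [|[|m]].
subst n.
case: hP => mlin [mC [mA [blin [bskew [bFI bL]]]]].
set D := fun w => br (upd xm k.+1 w).
have mul0 : forall z, mul 0 z = 0.
  move=> z; have := mlin 1 0 0 z; rewrite !scale1r addr0; exact: selfdbl.
have mulr0 : forall z, mul z 0 = 0 by move=> z; rewrite mC mul0.
have mulZr : forall c y v, mul y (c *: v) = c *: mul y v.
  by move=> c y v; rewrite mC -[c *: v]addr0 mlin mul0 addr0 mC.
have br0 : forall f (i : 'I_k.+2), br (upd f i 0) = 0.
  move=> f i; have := blin f i 1 0 0; rewrite !scale1r addr0; exact: selfdbl.
have n0 : (0 < k.+2)%N by [].
have nl : (k.+1 < k.+2)%N by [].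
pose i0 : 'I_k.+2 := Ordinal n0.
pose il : 'I_k.+2 := Ordinal nl.
have i0il : i0 != il by [].
have D0 : D 0 = 0 by rewrite /D (br0 xm il).
have sq0 : square mul br 0 by exists [::]; split => //; exact: mem0v.
have sqm : forall a b, square mul br (mul a b).
  move=> a b; exists [:: mul a b]; split; last by apply: memv_span; rewrite mem_head.
  by move=> w; rewrite inE => /eqP ->; right; exists a, b.
have sqb : forall f, square mul br (br f).
  move=> f; exists [:: br f]; split; last by apply: memv_span; rewrite mem_head.
  by move=> w; rewrite inE => /eqP ->; left; exists f.
have sqD : forall w, square mul br (D w) by move=> w; apply: sqb.
set x := xm i0.
pose s := tperm i0 il.
have sgn : ((-1) ^+ odd_perm s : R[i]) = -1 by rewrite odd_tperm i0il expr1.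
have Dx : D x = 0.
  suff e : D x = - D x by apply: dbl0; rewrite {2}e subrr.
  rewrite /D -scaleN1r -sgn -bskew; congr br; apply/ffunP => j; rewrite !ffunE /s.
  case: (tpermP i0 il j) => [->|->|/eqP h1 /eqP h2].
  all: rewrite /= /il /i0 /= ?eqxx; try reflexivity.
pose h := [ffun j => upd xm k.+1 0 (s j)].
have Dswap : forall u, br (upd h 0 u) = - D u.
  move=> u; rewrite /D -scaleN1r -sgn -bskew; congr br; apply/ffunP => j.
  rewrite !ffunE /s.
  case: (tpermP i0 il j) => [->|->|/eqP h1 /eqP h2].
  - by rewrite /i0 /il /= eqxx.
  - by rewrite /i0 /il /=.
  - have -> : (nat_of_ord j == 0)%N = false.
      by apply/negbTE; apply: contra h1 => /eqP hh; apply/eqP/val_inj.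
    have -> : (nat_of_ord j == k.+1)%N = false.
      by apply/negbTE; apply: contra h2 => /eqP hh; apply/eqP/val_inj.
    by [].
have DL : forall y z, D (mul y z) = mul y (D z) + mul z (D y).
  move=> y z; apply: oppr_inj; rewrite -Dswap bL !Dswap.
  have mulN : forall a v, mul a (- v) = - mul a v.
    by move=> a v; rewrite -scaleN1r mulZr scaleN1r.
  by rewrite !mulN opprD.
have upd0x : forall w, upd (upd xm k.+1 w) 0 x = upd xm k.+1 w.
  move=> w; apply/ffunP => j; rewrite !ffunE.
  case: eqP => // hj; rewrite /x.
  have -> : j = i0 by apply: val_inj.
  by rewrite /i0 /=.
have FL : forall y w, br (upd (upd xm k.+1 w) 0 (mul y x)) =
    mul y (D w) + mul x (br (upd (upd xm k.+1 w) 0 y)).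
  by move=> y w; rewrite bL upd0x.
have xx : mul x x = 0.
  apply: hQinj => //; rewrite -/(D _) -/(D 0) D0 DL Dx mulr0; exact: addr0.
have xD : forall w, mul x (D w) = 0.
  move=> w; have := FL x w; rewrite xx upd0x (br0 _ i0) -/(D w) => e.
  by apply: dbl0; rewrite e.
have xa : forall a, square mul br a -> mul x a = 0.
  by move=> a /hQsurj [z [_ <-]]; apply: xD.
have yx : forall y, mul y x = 0.
  move=> y; apply: hQinj => //; rewrite -/(D _) -/(D 0) D0 DL Dx mulr0 add0r.
  exact: xD.
have yD : forall y w, mul y (D w) = 0.
  move=> y w; have := FL y w; rewrite yx (br0 _ i0) xa ?addr0 //.
by move=> a b; apply: hQinj => //; rewrite -/(D _) -/(D 0) D0 DL !yD addr0.
Qed.
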